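(* Let $\Bbbk$ be a field, $n$ a positive integer, and $\mathbb{F}=\Bbbk[\xi]\simeq\Bbbk[x]/(f(x))$ a quadratic field extension where $\xi$ is a root of the irreducible polynomial $f$, which is either $f(x)=x^2+\tau$ or $f(x)=x^2+x+\tau$ with $\tau\in\Bbbk$. Let $Z=A+\xi B$ and $W=C+\xi D$ be in $M_n(\mathbb{F})$ with $A,B,C,D\in M_n(\Bbbk)$. If $f(x)=x^2+\tau$, then $ZW=N_1+\xi N_2$ where $M_1=(A-B)(C+\tau D)$, $M_2=AD$, $M_3=BC$, $N_1=M_1-\tau M_2+M_3$, $N_2=M_2+M_3$. If $f(x)=x^2+x+\tau$, then $ZW=N_1+\xi N_2$ where $M_1=AC$, $M_2=BD$, $M_3=(A-B)(C-D)$, $N_1=M_1-\tau M_2$, $N_2=M_1-M_3$. Moreover, these two algorithms are optimal in the sense of the minimum number of multiplications in $M_n(\Bbbk)$: among all algorithms computing the product map $M_n(\mathbb{F})\times M_n(\mathbb{F})\to M_n(\mathbb{F})$ using multiplications and additions of the indeterminate matrices together with scalar multiplications, none uses fewer than three multiplications in $M_n(\Bbbk)$.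
   Context: $M_n(\mathbb{L})$ denotes the algebra of $n\times n$ matrices over a field $\mathbb{L}$. Since $M_n(\mathbb{F})=M_n(\Bbbk)\otimes_\Bbbk\mathbb{F}$, every $Z\in M_n(\mathbb{F})$ is uniquely written $A+\xi B$ with $A,B\in M_n(\Bbbk)$. A multiplication in $M_n(\Bbbk)$ is a product of a linear combination of $A,B$ with a linear combination of $C,D$. *)

(* Defs.v *)
From HB Require Import structures.
From mathcomp Require Import all_boot all_order all_algebra all_field.
Set Implicit Arguments. Unset Strict Implicit. Unset Printing Implicit Defensive.
Import GRing.Theory.
Local Open Scope ring_scope.

Definition quad_poly (K : fieldType) (b : bool) (tau : K) : {poly K} :=
  if b then 'X^2 + tau%:P else 'X^2 + 'X + tau%:P.

Definition liftmx (K : fieldType) (L : fieldExtType K) (n : nat)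
  (A : 'M[K]_n) : 'M[L]_n := map_mx (in_alg L) A.

Definition alg_N1 (K : fieldType) (b : bool) (tau : K) (n : nat)
  (A B C D : 'M[K]_n) : 'M[K]_n :=
  if b then
    let M1 := (A - B) *m (C + tau *: D) in
    let M2 := A *m D in let M3 := B *m C in
    M1 - tau *: M2 + M3
  else
    let M1 := A *m C in let M2 := B *m D in
    M1 - tau *: M2.

Definition alg_N2 (K : fieldType) (b : bool) (tau : K) (n : nat)
  (A B C D : 'M[K]_n) : 'M[K]_n :=
  if b then
    let M2 := A *m D in let M3 := B *m C in M2 + M3
  else
    let M1 := A *m C in let M3 := (A - B) *m (C - D) in M1 - M3.

(* A bilinear algorithm with r multiplications in M_n(k):
   M_i = (al_i A + be_i B)(ga_i C + de_i D), i < r, and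
   ZW = N1 + xi N2 with N1 = sum_i u_i M_i, N2 = sum_i v_i M_i,
   for all A B C D in M_n(k) (Z = A + xi B, W = C + xi D). *)
Definition computes_product (K : fieldType) (L : fieldExtType K) (xi : L)
  (n r : nat) (al be ga de u v : 'I_r -> K) : Prop :=
  forall A B C D : 'M[K]_n,
    let M i := (al i *: A + be i *: B) *m (ga i *: C + de i *: D) in
    (liftmx L A + xi *: liftmx L B) *m (liftmx L C + xi *: liftmx L D)
    = liftmx L (\sum_(i < r) u i *: M i) + xi *: liftmx L (\sum_(i < r) v i *: M i).

(* Main.v *)
Require Import Defs.
From HB Require Import structures.
From mathcomp Require Import all_boot all_order all_algebra all_field.
From mathcomp Require Import ring.
Import GRing.Theory.
Local Open Scope ring_scope.
Set Implicit Arguments.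

Lemma part1 (K : fieldType) (L : fieldExtType K) (n : nat)
  (b : bool) (tau : K) (xi : L) :
  root (map_poly (in_alg L) (quad_poly b tau)) xi ->
  (forall A B C D : 'M[K]_n,
     (liftmx L A + xi *: liftmx L B) *m (liftmx L C + xi *: liftmx L D)
     = liftmx L (alg_N1 b tau A B C D) + xi *: liftmx L (alg_N2 b tau A B C D)).
Proof.
move=> hr A B C D; rewrite /liftmx /alg_N1 /alg_N2.
move: hr; rewrite /root /quad_poly.
case: b => /=; rewrite !rmorphD /= => /eqP hr; rewrite ?rmorphXn /= ?map_polyX ?map_polyC ?hornerE /= in hr.
- have ht : tau%:A = - xi ^+ 2 by apply: (addrI (xi^+2)); rewrite hr; ring.
  rewrite !(map_mxD, map_mxB, map_mxN, map_mxM, map_mxZ) /= ht.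
  set a := map_mx _ A; set b := map_mx _ B; set c := map_mx _ C; set d := map_mx _ D.
  rewrite !(mulmxDl, mulmxDr, mulmxBl, mulmxBr, mulNmx, mulmxN) -?scalemxAl -?scalemxAr.
  move: (a *m c) (a *m d) (b *m c) (b *m d) => P Q R S.
  apply/matrixP=> i j; rewrite !mxE; ring.
- have ht : tau%:A = - xi ^+ 2 - xi by apply: (addrI (xi^+2 + xi)); rewrite hr; ring.
  rewrite !(map_mxD, map_mxB, map_mxN, map_mxM, map_mxZ) /= ht.
  set a := map_mx _ A; set b := map_mx _ B; set c := map_mx _ C; set d := map_mx _ D.
  rewrite !(mulmxDl, mulmxDr, mulmxBl, mulmxBr, mulNmx, mulmxN) -?scalemxAl -?scalemxAr.
  move: (a *m c) (a *m d) (b *m c) (b *m d) => P Q R S.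
  apply/matrixP=> i j; rewrite !mxE; ring.
Qed.
Lemma size_quad (K : fieldType) (b : bool) (tau : K) : size (quad_poly b tau) = 3%N.
Proof.
case: b; rewrite /quad_poly.
  by rewrite size_polyDl ?size_polyXn // size_polyC; case: (tau != 0).
by rewrite -addrA size_polyDl ?size_polyXn ?size_XaddC.
Qed.

Lemma xi_notin (K : fieldType) (L : fieldExtType K) (b : bool) (tau : K) (xi : L) :
  irreducible_poly (quad_poly b tau) ->
  root (map_poly (in_alg L) (quad_poly b tau)) xi ->
  forall x y : K, x%:A + xi * y%:A = 0 -> x = 0 /\ y = 0.
Proof.
move=> hirr hr x y h.
have hy : y = 0.
  apply/eqP; apply: contraT => hy0.
  have hyA : in_alg L y != 0 by rewrite fmorph_eq0.
  have hxi : xi = in_alg L (- x / y).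
    apply: (mulIf hyA).
    rewrite -rmorphM mulfVK // rmorphN /=.
    by apply/eqP; rewrite -addr_eq0 addrC; apply/eqP; exact: h.
  rewrite hxi fmorph_root in hr.
  have := apply_irredp hirr (q := 'X - (- x / y)%:P).
  rewrite size_XsubC dvdp_XsubCl hr => /(_ isT isT) /eqp_size.
  by rewrite size_XsubC size_quad.
split => //.
move: h; rewrite hy scale0r mulr0 addr0 => /eqP.
by rewrite -[x%:A]/(in_alg L x) fmorph_eq0 => /eqP.
Qed.

Lemma kill (K : fieldType) (a c : K) :
  exists x y : K, ((x != 0) || (y != 0)) /\ a * x + c * y = 0.
Proof.
have [/andP [/eqP -> /eqP ->]|h] := boolP ((a == 0) && (c == 0)).
  by exists 1, 0; rewrite oner_eq0 /=; split => //; ring.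
exists c, (- a); split; last by ring.
by move: h; rewrite negb_and oppr_eq0 orbC.
Qed.

Lemma core (K : fieldType) (L : fieldExtType K) (xi : L) (n r : nat)
  (al be ga de u v : 'I_r -> K) (x y z w : K) :
  (0 < n)%N -> computes_product xi n al be ga de u v ->
  (forall i, al i * x + be i * y = 0 \/ ga i * z + de i * w = 0) ->
  (x%:A + xi * y%:A) * (z%:A + xi * w%:A) = 0.
Proof.
case: n => // n _ hc hk.
pose E := delta_mx ord0 ord0 : 'M[K]_n.+1.
have := hc (x *: E) (y *: E) (z *: E) (w *: E) => /=.
rewrite big1; last first.
  move=> i _; rewrite !scalerA -!scalerDl.
  by case: (hk i) => ->; rewrite scale0r ?mul0mx ?mulmx0 scaler0.
rewrite big1; last first.
  move=> i _; rewrite !scalerA -!scalerDl.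
  by case: (hk i) => ->; rewrite scale0r ?mul0mx ?mulmx0 scaler0.
rewrite /liftmx map_mx0 scaler0 addr0 !map_mxZ /=.
rewrite !scalerA -!scalerDl -scalemxAl -scalemxAr scalerA -map_mxM mul_delta_mx.
move/matrixP/(_ ord0 ord0); rewrite !mxE eqxx /= scale1r mulr1.
by [].
Qed.

Lemma contra_core (K : fieldType) (L : fieldExtType K) (n : nat)
  (b : bool) (tau : K) (xi : L) (r : nat) (al be ga de u v : 'I_r -> K) (x y z w : K) :
  (0 < n)%N ->
  irreducible_poly (quad_poly b tau) ->
  root (map_poly (in_alg L) (quad_poly b tau)) xi ->
  computes_product xi n al be ga de u v ->
  (x != 0) || (y != 0) -> (z != 0) || (w != 0) ->
  (forall i, al i * x + be i * y = 0 \/ ga i * z + de i * w = 0) -> False.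
Proof.
move=> hn hirr hr hc hxy hzw hk.
have /eqP := @core _ _ xi n r al be ga de u v x y z w hn hc hk; rewrite mulf_eq0 => /orP [] /eqP H.
  have [hx hy] := @xi_notin _ L b tau xi hirr hr x y H.
  by move: hxy; rewrite hx hy eqxx.
have [hz hw] := @xi_notin _ L b tau xi hirr hr z w H.
by move: hzw; rewrite hz hw eqxx.
Qed.

Unset Implicit Arguments.

Theorem proposition3p1 (K : fieldType) (L : fieldExtType K) (n : nat)
  (b : bool) (tau : K) (xi : L) :
  (0 < n)%N ->
  irreducible_poly (quad_poly b tau) ->
  root (map_poly (in_alg L) (quad_poly b tau)) xi ->
  <<1%VS; xi>>%VS = fullv ->
  (forall A B C D : 'M[K]_n,
     (liftmx L A + xi *: liftmx L B) *m (liftmx L C + xi *: liftmx L D)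
     = liftmx L (alg_N1 b tau A B C D) + xi *: liftmx L (alg_N2 b tau A B C D))
  /\
  (forall (r : nat) (al be ga de u v : 'I_r -> K),
     computes_product xi n al be ga de u v -> (3 <= r)%N).
Proof.
move=> hn hirr hr _; split; first exact: part1.
move=> r al be ga de u v hc; rewrite leqNgt; apply/negP => hr3.
have h10 : ((1 : K) != 0) || ((0 : K) != 0) by rewrite oner_eq0.
move: al be ga de u v hc hr3; case: r => [|[|[|r]]] // al be ga de u v hc _.
- apply: (@contra_core K L n b tau xi 0 al be ga de u v 1 0 1 0 hn hirr hr hc h10 h10) => i.
  by case: i.
- have [x [y [hxy hk]]] := @kill K (al ord0) (be ord0).
  apply: (@contra_core K L n b tau xi 1 al be ga de u v x y 1 0 hn hirr hr hc hxy h10) => i; left.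
  by rewrite (ord1 i).
- have [x [y [hxy hk]]] := @kill K (al ord0) (be ord0).
  have [z [w [hzw hk']]] := @kill K (ga ord_max) (de ord_max).
  apply: (@contra_core K L n b tau xi 2 al be ga de u v x y z w hn hirr hr hc hxy hzw) => i.
  have [->|hi] := eqVneq i ord0; first by left.
  case: i hi => [[|[|m]] hm] hi //.
  right; suff -> : Ordinal hm = ord_max by [].
  exact: val_inj.
Qed.
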